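(* Let $K$ be a field, $b\ge2$ an integer, and let $M=(m_{i,j})_{i,j\ge0}$ be an infinite matrix over $K$ that is $b$-autosimilar and non-degenerate. Then there is a factorization $M=LDU$ where $L$, $D$, $U$ are $b$-autosimilar infinite matrices, $L$ is unipotent lower-triangular, $D$ is diagonal, and $U$ is unipotent upper-triangular.
   Context: An infinite matrix $M=(m_{i,j})_{i,j\ge0}$ is $b$-autosimilar if $m_{0,0}=1$ and $m_{s,t}=\prod_i m_{\sigma_i,\tau_i}$ whenever $s=\sum_i\sigma_ib^i$, $t=\sum_i\tau_ib^i$ are base-$b$ expansions with $\sigma_i,\tau_i\in\{0,\dots,b-1\}$. $M(n)$ denotes the submatrix $(m_{i,j})_{0\le i,j<n}$. A $b$-autosimilar $M$ is non-degenerate if $\det(M(n))$ is invertible (nonzero) for $n=2,\dots,b$. The product $LDU$ of infinite triangular/diagonal matrices is defined entrywise by finite sums. *)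

(* Defs.v *)
From HB Require Import structures.
From mathcomp Require Import all_boot all_order all_algebra.
Set Implicit Arguments. Unset Strict Implicit. Unset Printing Implicit Defensive.
Import GRing.Theory.
Local Open Scope ring_scope.

Definition infmx (K : Type) := nat -> nat -> K.

Definition digit (b s i : nat) : nat := ((s %/ b ^ i) %% b)%N.

(* b-autosimilarity: m 0 0 = 1 and m s t = prod_i m (sigma_i) (tau_i).
   The infinite product is written as the finite product over any range
   of digit positions covering all nonzero digits of s and t (the
   remaining factors are m 0 0 = 1). *)
Definition autosimilar (K : fieldType) (b : nat) (M : infmx K) : Prop :=
  M 0%N 0%N = 1 /\
  forall (s t N : nat), (s < b ^ N)%N -> (t < b ^ N)%N ->
    M s t = \prod_(i < N) M (digit b s i) (digit b t i).

Definition submx_n (K : Type) (M : infmx K) (n : nat) : 'M[K]_n :=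
  \matrix_(i < n, j < n) M i j.

Definition autosim_nondegenerate (K : fieldType) (b : nat) (M : infmx K) : Prop :=
  forall n : nat, (2 <= n <= b)%N -> \det (submx_n M n) != 0.

Definition unipotent_lower (K : fieldType) (L : infmx K) : Prop :=
  (forall s, L s s = 1) /\ (forall s t, (s < t)%N -> L s t = 0).

Definition unipotent_upper (K : fieldType) (U : infmx K) : Prop :=
  (forall s, U s s = 1) /\ (forall s t, (t < s)%N -> U s t = 0).

Definition infmx_diagonal (K : fieldType) (D : infmx K) : Prop :=
  forall s t, s <> t -> D s t = 0.

(* Entry (s,t) of L D U, for L lower-triangular and U upper-triangular:
   a finite sum, since L s k = 0 for k > s and U l t = 0 for l > t. *)
Definition LDU_entry (K : fieldType) (L D U : infmx K) (s t : nat) : K :=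
  \sum_(k < s.+1) \sum_(l < t.+1) L s k * D k l * U l t.

(* Main.v *)
Require Import Defs.
From HB Require Import structures.
From mathcomp Require Import all_boot all_order all_algebra.
From mathcomp Require Import zify.
Set Implicit Arguments. Unset Strict Implicit. Unset Printing Implicit Defensive.
Import GRing.Theory.
Local Open Scope ring_scope.

Lemma digit0 b s : digit b s 0 = (s %% b)%N.
Proof. by rewrite /digit expn0 divn1. Qed.

Lemma digitS b s i : digit b s i.+1 = digit b (s %/ b) i.
Proof. by rewrite /digit expnS divnMA. Qed.

Lemma digit_big b s i : (0 < b)%N -> (s < b ^ i)%N -> digit b s i = 0%N.
Proof. by move=> b0 h; rewrite /digit divn_small // mod0n. Qed.

Lemma lt_pow b s : (2 <= b)%N -> (s < b ^ s)%N.
Proof.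
move=> hb; elim: s => [|s IH]; first by rewrite expn0.
rewrite expnS; apply: (@leq_trans (2 * b ^ s)); last by rewrite leq_mul2r hb orbT.
rewrite mul2n -addnn; have : (0 < b ^ s)%N by rewrite expn_gt0; lia.
move: IH; lia.
Qed.

Lemma digits_eq b N s t : (0 < b)%N -> (s < b ^ N)%N -> (t < b ^ N)%N ->
  (forall i, (i < N)%N -> digit b s i = digit b t i) -> s = t.
Proof.
move=> b0; elim: N s t => [|N IH] s t hs ht hd.
  by move: hs ht; rewrite expn0; lia.
rewrite (divn_eq s b) (divn_eq t b).
have h0 := hd 0%N isT; rewrite !digit0 in h0; rewrite h0; congr (_ * _ + _)%N.
apply: IH.
- by rewrite ltn_divLR // -expnSr.
- by rewrite ltn_divLR // -expnSr.
by move=> i hi; rewrite -!digitS; apply: hd.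
Qed.

Lemma digits_lt b N s t : (0 < b)%N -> (t < b ^ N)%N -> (s < t)%N ->
  exists2 i, (i < N)%N & (digit b s i < digit b t i)%N.
Proof.
move=> b0; elim: N s t => [|N IH] s t ht hst.
  by move: ht; rewrite expn0 ltnS leqn0 => /eqP ht; rewrite ht in hst.
have ht' : (t %/ b < b ^ N)%N by rewrite ltn_divLR // -expnSr.
case: (ltngtP (s %/ b) (t %/ b)) => h.
- have [i hi hd] := IH _ _ ht' h; by exists i.+1; rewrite ?digitS.
- have : (s %/ b <= t %/ b)%N by apply: leq_div2r; apply: ltnW.
  by rewrite leqNgt h.
- exists 0%N => //; rewrite !digit0.
  have := hst; rewrite {1}(divn_eq s b) {1}(divn_eq t b) h.
  by rewrite ltn_add2l.
Qed.

Definition tens (K : fieldType) (b : nat) (m : nat -> nat -> K) : infmx K :=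
  fun s t => \prod_(i < s + t + 1) m (digit b s i) (digit b t i).

Lemma prod_widen (K : fieldType) b (m : nat -> nat -> K) s t N N' :
  m 0%N 0%N = 1 -> (0 < b)%N -> (s < b ^ N)%N -> (t < b ^ N)%N -> (N <= N')%N ->
  \prod_(i < N') m (digit b s i) (digit b t i) = \prod_(i < N) m (digit b s i) (digit b t i).
Proof.
move=> m00 b0 hs ht hN.
rewrite [RHS](big_ord_widen N' (fun i => m (digit b s i) (digit b t i))) //.
rewrite [RHS]big_mkcond /=; apply: eq_bigr => i _.
case: ifP => // /negbT; rewrite -leqNgt => hi.
have hb : (b ^ N <= b ^ i)%N by rewrite leq_pexp2l.
rewrite !digit_big //; by apply: leq_trans hb.
Qed.

Lemma tens_prod (K : fieldType) b (m : nat -> nat -> K) s t N :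
  m 0%N 0%N = 1 -> (2 <= b)%N -> (s < b ^ N)%N -> (t < b ^ N)%N ->
  tens b m s t = \prod_(i < N) m (digit b s i) (digit b t i).
Proof.
move=> m00 b2 hs ht.
have b0 : (0 < b)%N by apply: leq_trans b2.
have hs' : (s < b ^ (s + t + 1))%N.
  apply: (leq_trans (lt_pow s b2)); rewrite leq_pexp2l //; lia.
have ht' : (t < b ^ (s + t + 1))%N.
  apply: (leq_trans (lt_pow t b2)); rewrite leq_pexp2l //; lia.
rewrite /tens -(@prod_widen K b m s t (s + t + 1) (maxn (s+t+1) N)) ?leq_maxl //.
by rewrite (@prod_widen K b m s t N (maxn (s+t+1) N)) ?leq_maxr.
Qed.

Lemma tens_small (K : fieldType) b (m : nat -> nat -> K) s t :
  m 0%N 0%N = 1 -> (2 <= b)%N -> (s < b)%N -> (t < b)%N -> tens b m s t = m s t.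
Proof.
move=> m00 b2 hs ht.
rewrite (@tens_prod K b m s t 1) ?expn1 // big_ord1 !digit0 !modn_small //.
Qed.

Lemma tens_auto (K : fieldType) b (m : nat -> nat -> K) :
  m 0%N 0%N = 1 -> (2 <= b)%N -> autosimilar b (tens b m).
Proof.
move=> m00 b2; split.
  by rewrite /tens big_ord1 /digit !div0n !mod0n.
move=> s t N hs ht.
rewrite (tens_prod m00 b2 hs ht); apply: eq_bigr => i _.
have b0 : (0 < b)%N by apply: leq_trans b2.
by rewrite tens_small // /digit ltn_mod.
Qed.

Lemma sum_digits (K : fieldType) b N (F : nat -> nat -> K) : (0 < b)%N ->
  \sum_(k < b ^ N) \prod_(i < N) F i (digit b k i) = \prod_(i < N) \sum_(c < b) F i c.
Proof.
move=> b0; elim: N F => [|N IH] F.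
  by rewrite expn0 big_ord1 !big_ord0.
rewrite big_ord_recl -(IH (fun i => F i.+1)) big_distrr /=.
rewrite -(big_mkord xpredT (fun k => \prod_(i < N.+1) F i (digit b k i))).
rewrite expnSr big_nat_mul /= big_mkord.
apply: eq_bigr => q _.
rewrite -{1}[(q * b)%N]add0n big_addn mulSn addnK big_mkord big_distrl /=.
apply: eq_bigr => c _.
rewrite big_ord_recl digit0 /=; congr (_ * _).
  by rewrite addnC modnMDl modn_small.
apply: eq_bigr => i _; rewrite /bump /= add1n digitS.
by rewrite divnDMl // divn_small // add0n.
Qed.

Lemma det_schur (K : fieldType) k (f : nat -> nat -> K) : f 0%N 0%N != 0 ->
  \det (\matrix_(i < k.+1, j < k.+1) f i j) =
  f 0%N 0%N * \det (\matrix_(i < k, j < k)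
      (f i.+1 j.+1 - f i.+1 0%N * f 0%N j.+1 / f 0%N 0%N)).
Proof.
move=> a0; set a := f 0%N 0%N.
set S := \matrix_(i < k, j < k) _.
pose A : 'M[K]_(1 + k) := \matrix_(i < 1 + k, j < 1 + k) f i j.
pose Lm : 'M[K]_(1 + k) := block_mx 1%:M 0 (\col_i (f i.+1 0%N / a)) 1%:M.
pose Um : 'M[K]_(1 + k) := block_mx a%:M (\row_j f 0%N j.+1) 0 S.
have -> : \matrix_(i < k.+1, j < k.+1) f i j = A by [].
have -> : A = Lm *m Um.
  rewrite /Lm /Um mulmx_block !mul1mx !mul0mx !addr0 mul_mx_scalar.
  rewrite -[A]submxK; congr block_mx; apply/matrixP => i j; rewrite !mxE.
  - by rewrite !ord1.
  - by rewrite !ord1.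
  - by rewrite ord1 /= mulrC divfK.
  - rewrite big_ord_recl big_ord0 !mxE /=.
    by rewrite addr0 mulrAC addrC subrK.
rewrite det_mulmx /Lm /Um (@det_lblock K 1 k) (@det_ublock K 1 k) !det1 mul1r mul1r det_scalar1.
by [].
Qed.

Lemma ldu_fin (K : fieldType) n : forall f : nat -> nat -> K,
 (forall k, (0 < k <= n)%N -> \det (\matrix_(i < k, j < k) f i j) != 0) ->
 exists l u : nat -> nat -> K, exists d : nat -> K,
  [/\ forall i, l i i = 1, forall i j, (i < j)%N -> l i j = 0,
      forall i, u i i = 1, forall i j, (j < i)%N -> u i j = 0 &
      forall i j, (i < n)%N -> (j < n)%N ->
         f i j = \sum_(k < n) l i k * d k * u k j].
Proof.
elim: n => [|n IH] f hf.
  exists (fun i j => (i == j)%:R), (fun i j => (i == j)%:R), (fun _ => 0).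
  split => //.
  - by move=> i; rewrite eqxx.
  - by move=> i j hij; rewrite ltn_eqF.
  - by move=> i; rewrite eqxx.
  - by move=> i j hij; rewrite gtn_eqF.
have a0 : f 0%N 0%N != 0.
  by have := hf 1%N isT; rewrite det_mx11 mxE.
set a := f 0%N 0%N in a0 *.
pose g i j := f i.+1 j.+1 - f i.+1 0%N * f 0%N j.+1 / a.
have hg : forall k, (0 < k <= n)%N -> \det (\matrix_(i < k, j < k) g i j) != 0.
  move=> k /andP [k0 kn].
  have hk : (0 < k.+1 <= n.+1)%N by exact: kn.
  by have := hf k.+1 hk; rewrite det_schur // mulf_eq0 negb_or => /andP [_].
have [l' [u' [d' [hl1 hl0 hu1 hu0 hs]]]] := IH g hg.
exists (fun i j => match i, j with O, O => 1 | O, S _ => 0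
          | S _, O => f i 0%N / a | S i', S j' => l' i' j' end).
exists (fun i j => match i, j with O, O => 1 | O, S _ => f 0%N j / a
          | S _, O => 0 | S i', S j' => u' i' j' end).
exists (fun k => match k with O => a | S k' => d' k' end).
split.
- by case.
- by case=> [|i] [|j] //= hij; apply: hl0.
- by case.
- by case=> [|i] [|j] //= hij; apply: hu0.
move=> i j hi hj; rewrite big_ord_recl /=.
case: i hi => [|i] hi; case: j hj => [|j] hj /=.
- rewrite big1 => [|k _]; last by rewrite !mul0r.
  by rewrite addr0 mulr1 mul1r.
- rewrite big1 => [|k _]; last by rewrite !mul0r.
  by rewrite addr0 mul1r mulrC divfK.
- rewrite big1 => [|k _]; last by rewrite mulr0.
  by rewrite addr0 mulr1 divfK.
rewrite -hs // /g.
by rewrite divfK // mulrA addrC subrK.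
Qed.

Lemma sum_widen (K : fieldType) n m (F : nat -> K) : (n <= m)%N ->
  (forall k, (n <= k)%N -> (k < m)%N -> F k = 0) ->
  \sum_(k < n) F k = \sum_(k < m) F k.
Proof.
move=> nm hF; rewrite (big_ord_widen m F) // big_mkcond; apply: eq_bigr => i _.
by case: ifP => // /negbT; rewrite -leqNgt => h; rewrite hF.
Qed.

Lemma tens_lt0 (K : fieldType) b (m : nat -> nat -> K) s t :
  (2 <= b)%N -> (forall i j, (i < j)%N -> m i j = 0) -> (s < t)%N -> tens b m s t = 0.
Proof.
move=> b2 hm st.
have b0 : (0 < b)%N by apply: leq_trans b2.
have ht : (t < b ^ (s + t + 1))%N.
  apply: (leq_trans (lt_pow t b2)); rewrite leq_pexp2l //; lia.
have [i hi hd] := digits_lt b0 ht st.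
by rewrite /tens (bigD1 (Ordinal hi)) //= hm // mul0r.
Qed.

Lemma tens_gt0 (K : fieldType) b (m : nat -> nat -> K) s t :
  (2 <= b)%N -> (forall i j, (j < i)%N -> m i j = 0) -> (t < s)%N -> tens b m s t = 0.
Proof.
move=> b2 hm st.
have b0 : (0 < b)%N by apply: leq_trans b2.
have hs : (s < b ^ (s + t + 1))%N.
  apply: (leq_trans (lt_pow s b2)); rewrite leq_pexp2l //; lia.
have [i hi hd] := digits_lt b0 hs st.
by rewrite /tens (bigD1 (Ordinal hi)) //= hm // mul0r.
Qed.

Lemma tens_diag1 (K : fieldType) b (m : nat -> nat -> K) s :
  (forall i, m i i = 1) -> tens b m s s = 1.
Proof. by move=> hm; rewrite /tens big1. Qed.

Theorem theorem2p1 (K : fieldType) (b : nat) (M : infmx K) :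
  (2 <= b)%N ->
  autosimilar b M ->
  autosim_nondegenerate b M ->
  exists L D U : infmx K,
    [/\ autosimilar b L, autosimilar b D & autosimilar b U] /\
    [/\ unipotent_lower L, infmx_diagonal D & unipotent_upper U] /\
    (forall s t : nat, M s t = LDU_entry L D U s t).
Proof.
move=> b2 Ma Mnd; have [M00 Mauto] := Ma.
have b0 : (0 < b)%N by apply: leq_trans b2.
have hf : forall k, (0 < k <= b)%N -> \det (\matrix_(i < k, j < k) M i j) != 0.
  move=> [|[|k]] // hk.
    by rewrite det_mx11 mxE M00 oner_neq0.
  exact: Mnd.
have [l [u [d [hl1 hl0 hu1 hu0 hs]]]] := ldu_fin hf.
have d0 : d 0%N = 1.
  have := hs 0%N 0%N b0 b0; rewrite M00 (bigD1 (Ordinal b0)) //= big1 ?addr0.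
    by rewrite hl1 hu1 mulr1 mul1r.
  move=> k hk; rewrite hl0 ?mul0r // lt0n; apply: contra hk => /eqP hk0.
  by apply/eqP/val_inj.
pose dd i j := if i == j then d i else 0.
have dd00 : dd 0%N 0%N = 1 by rewrite /dd eqxx.
have Ddiag : infmx_diagonal (tens b dd).
  move=> s t st.
  have ht : (t < b ^ (s + t + 1))%N.
    apply: (leq_trans (lt_pow t b2)); rewrite leq_pexp2l //; lia.
  have hs' : (s < b ^ (s + t + 1))%N.
    apply: (leq_trans (lt_pow s b2)); rewrite leq_pexp2l //; lia.
  have /existsP [i hi] : [exists i : 'I_(s + t + 1), digit b s i != digit b t i].
    apply: contraT => /existsPn h; exfalso; apply: st.
    apply: (digits_eq b0 hs' ht) => i hi.
    by have := h (Ordinal hi); rewrite negbK => /eqP.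
  by rewrite /tens (bigD1 i) //= /dd (negbTE hi) mul0r.
exists (tens b l), (tens b dd), (tens b u).
split; first by split; apply: tens_auto.
split.
  split; [split|idtac|split].
  - by move=> s; apply: tens_diag1.
  - by move=> s t; apply: tens_lt0.
  - exact: Ddiag.
  - by move=> s; apply: tens_diag1.
  - by move=> s t; apply: tens_gt0.
move=> s t.
set N := (s + t + 1)%N.
have ht : (t < b ^ N)%N.
  apply: (leq_trans (lt_pow t b2)); rewrite leq_pexp2l //; lia.
have hs' : (s < b ^ N)%N.
  apply: (leq_trans (lt_pow s b2)); rewrite leq_pexp2l //; lia.
have hl00 : l 0%N 0%N = 1 by [].
have hu00 : u 0%N 0%N = 1 by [].
rewrite /LDU_entry.
rewrite (@sum_widen K s.+1 (b ^ N) (fun k => \sum_(j < t.+1) tens b l s k * tens b dd k j * tens b u j t)) //; last first.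
  move=> k sk kN; rewrite big1 // => j _.
  by rewrite (@tens_lt0 K b l s k) // !mul0r.
under eq_bigr => k _.
  rewrite (@sum_widen K t.+1 (b ^ N) (fun j => tens b l s k * tens b dd k j * tens b u j t)) //; last first.
    by move=> j tj jN; rewrite (@tens_gt0 K b u j t) // mulr0.
  rewrite (bigD1 k) //= big1 ?addr0; last first.
    move=> j hj; rewrite Ddiag ?mulr0 ?mul0r //.
    by move=> kj; move: hj; rewrite (_ : j = k) ?eqxx //; apply: val_inj.
  over.
under eq_bigr => k _.
  rewrite (tens_prod hl00 b2 hs' (ltn_ord k)) (tens_prod dd00 b2 (ltn_ord k) (ltn_ord k)).
  rewrite (tens_prod hu00 b2 (ltn_ord k) ht) -!big_split /=.
  over.
rewrite (Mauto s t N hs' ht) /=.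
rewrite (@sum_digits K b N (fun i c => l (digit b s i) c * dd c c * u c (digit b t i))) //.
apply: eq_bigr => i _.
have hsi : (digit b s i < b)%N by rewrite /digit ltn_mod.
have hti : (digit b t i < b)%N by rewrite /digit ltn_mod.
rewrite (hs _ _ hsi hti); apply: eq_bigr => c _.
by rewrite /dd eqxx.
Qed.
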